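(* Let $G$ be a finite group acting on a weighted simplicial complex $\Omega$ on $[n]$. Then there exist a weighted simplicial complex $\Omega'$ on $[n]$, obtained from $\Omega$ by increasing the weights of the facets (i.e. $\Omega'(S)=\Omega(S)$ for every $S$ that is not a facet of $\Omega$, $\Omega'$ has the same facets as $\Omega$, and $\Omega'(F)\geq\Omega(F)$ for each facet $F$), and an action of $G$ on $\Omega'$ which is free, whose action on $[n]$ is the given one, and which refines the given action, in the sense that there is a $G$-linear map $\tilde c\colon \widetilde{\mathcal F}(\Omega')\to\widetilde{\mathcal F}(\Omega)$ with $c\circ\tilde c=c'$, where $c,c'$ are the collapse maps of $\Omega,\Omega'$.
   Context: Write $[n]=\{0,\ldots,n\}$ and $\mathcal P_n$ for its power set. A weighted simplicial complex (wsc) on $[n]$ is a function $\Omega\colon\mathcal P_n\to\mathbb N=\{0,1,2,\ldots\}$ such that $S_1\subseteq S_2$ implies that $\Omega(S_1)$ divides $\Omega(S_2)$. A set $S$ with $\Omega(S)\neq0$ is a simplex; it is assumed that every singleton is a simplex. A facet is a simplex maximal under inclusion; $\mathcal F$ is the set of facets. The multiset $\widetilde{\mathcal F}=\widetilde{\mathcal F}(\Omega)$ contains each facet $F$ exactly $\Omega(F)$ times, and the collapse map $c\colon\widetilde{\mathcal F}\to\mathcal F$ sends each copy to the underlying facet. A map $f\colon X\to Y$ between $G$-sets is $G$-linear if $f(gx)=gf(x)$. A group action of $G$ on the wsc $\Omega$ consists of an action of $G$ on $[n]$ such that $\Omega(gS)=\Omega(S)$ for all $S\in\mathcal P_n$,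 $g\in G$ (this induces an action on $\mathcal F$), together with an action of $G$ on $\widetilde{\mathcal F}$ such that the collapse map $c$ is $G$-linear. The action on $\Omega$ is free if the action of $G$ on $\widetilde{\mathcal F}$ is free (every element of $\widetilde{\mathcal F}$ has trivial stabiliser). *)

(* Defs.v *)
From mathcomp Require Import all_boot all_order all_fingroup.
Set Implicit Arguments. Unset Strict Implicit. Unset Printing Implicit Defensive.

(* [n] = {0,...,n} is the ordinal type 'I_n.+1; P_n is {set 'I_n.+1}.
   A weight function is a map {set 'I_n.+1} -> nat. *)
Section WSC.
Variable n : nat.
Notation V := 'I_n.+1.

Definition is_wsc (Om : {set V} -> nat) : Prop :=
  (forall S1 S2 : {set V}, S1 \subset S2 -> Om S1 %| Om S2) /\
  (forall i : V, Om [set i] != 0).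

Definition simplex (Om : {set V} -> nat) (S : {set V}) : bool := Om S != 0.

Definition facet (Om : {set V} -> nat) (S : {set V}) : bool :=
  simplex Om S && [forall T : {set V}, (S \proper T) ==> ~~ simplex Om T].

(* The multiset \tilde F(Om): the facet F appears Om F times, as the pairs
   (F, k) with k < Om F. *)
Definition Ftilde (Om : {set V} -> nat) : Type :=
  {p : {set V} * nat | facet Om p.1 && (p.2 < Om p.1)}.

Definition collapse (Om : {set V} -> nat) (x : Ftilde Om) : {set V} :=
  (val x).1.
End WSC.

Definition is_gaction (gT : finGroupType) (X : Type) (a : gT -> X -> X) : Prop :=
  (forall x, a 1%g x = x) /\ (forall g h x, a (g * h)%g x = a g (a h x)).

Definition wsc_action (n : nat) (gT : finGroupType) (Om : {set 'I_n.+1} -> nat)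
    (alpha : gT -> 'I_n.+1 -> 'I_n.+1) (beta : gT -> Ftilde Om -> Ftilde Om) : Prop :=
  [/\ is_gaction alpha,
      (forall g (S : {set 'I_n.+1}), Om (alpha g @: S) = Om S),
      is_gaction beta &
      (forall g x, collapse (beta g x) = alpha g @: collapse x)].

Definition free_action (gT : finGroupType) (X : Type) (beta : gT -> X -> X) : Prop :=
  forall g x, beta g x = x -> g = 1%g.

Arguments is_wsc {n} Om.
Arguments wsc_action {n gT} Om alpha beta.
Arguments free_action {gT X} beta.
Arguments collapse {n Om} x.

(* Main.v *)
Require Import Defs.
From mathcomp Require Import all_boot all_order all_fingroup.

Set Implicit Arguments. Unset Strict Implicit. Unset Printing Implicit Defensive.

Section Aux.
Variables (n : nat) (gT : finGroupType) (Om : {set 'I_n.+1} -> nat).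
Notation m := #|gT|.

Definition Om' (S : {set 'I_n.+1}) : nat :=
  if facet Om S then Om S * m else Om S.

Lemma m_gt0 : 0 < m.
Proof. by apply/card_gt0P; exists 1%g. Qed.

Lemma simplex' S : simplex Om' S = simplex Om S.
Proof.
rewrite /simplex /Om'; case: (facet Om S) => //.
by rewrite muln_eq0 (negbTE (lt0n_neq0 m_gt0)) orbF.
Qed.

Lemma facet' S : facet Om' S = facet Om S.
Proof.
rewrite /facet simplex'; congr (_ && _).
by apply: eq_forallb => T; rewrite simplex'.
Qed.

Lemma Om'_facet S : facet Om S -> Om' S = Om S * m.
Proof. by rewrite /Om' => ->. Qed.

Lemma enc_proof (x : Ftilde Om) (h : gT) :
  facet Om' (val x).1 && ((val x).2 * m + enum_rank h < Om' (val x).1).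
Proof.
case: x => [[F r]] /= /andP[fF rlt].
rewrite facet' fF Om'_facet //=.
apply: (@leq_trans (r * m + m)); first by rewrite ltn_add2l ltn_ord.
by rewrite -mulSnr leq_mul2r rlt orbT.
Qed.

Definition enc (x : Ftilde Om) (h : gT) : Ftilde Om' :=
  exist _ ((val x).1, (val x).2 * m + enum_rank h) (enc_proof x h).

Lemma dec1_proof (y : Ftilde Om') :
  facet Om (val y).1 && ((val y).2 %/ m < Om (val y).1).
Proof.
case: y => [[F k]] /= /andP[fF klt].
rewrite facet' in fF; rewrite fF /= ltn_divLR ?m_gt0 //.
by rewrite -Om'_facet.
Qed.

Definition dec1 (y : Ftilde Om') : Ftilde Om :=
  exist _ ((val y).1, (val y).2 %/ m) (dec1_proof y).

Definition dec2 (y : Ftilde Om') : gT :=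
  enum_val (Ordinal (ltn_pmod (val y).2 m_gt0)).

Lemma dec1_enc x h : dec1 (enc x h) = x.
Proof.
apply: val_inj; case: x => [[F r]] /= _.
by rewrite divnMDl ?m_gt0 // divn_small ?addn0 // ltn_ord.
Qed.

Lemma dec2_enc x h : dec2 (enc x h) = h.
Proof.
rewrite /dec2 /=.
have -> : Ordinal (ltn_pmod ((val x).2 * m + enum_rank h) m_gt0) = enum_rank h.
  by apply: val_inj => /=; rewrite modnMDl modn_small // ltn_ord.
exact: enum_rankK.
Qed.

Lemma enc_dec y : enc (dec1 y) (dec2 y) = y.
Proof.
apply: val_inj; case: y => [[F k] p] /=.
by rewrite /dec2 enum_valK /= -divn_eq.
Qed.

End Aux.

Theorem proposition2p7 (n : nat) (gT : finGroupType)
    (Om : {set 'I_n.+1} -> nat) (alpha : gT -> 'I_n.+1 -> 'I_n.+1)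
    (beta : gT -> Ftilde Om -> Ftilde Om) :
  is_wsc Om -> wsc_action Om alpha beta ->
  exists Om' : {set 'I_n.+1} -> nat,
    [/\ is_wsc Om',
        (forall S : {set 'I_n.+1}, ~~ facet Om S -> Om' S = Om S),
        (forall S : {set 'I_n.+1}, facet Om' S = facet Om S),
        (forall F : {set 'I_n.+1}, facet Om F -> Om F <= Om' F) &
        exists beta' : gT -> Ftilde Om' -> Ftilde Om',
          [/\ wsc_action Om' alpha beta',
              free_action beta' &
              exists ct : Ftilde Om' -> Ftilde Om,
                (forall g x, ct (beta' g x) = beta g (ct x)) /\
                (forall x, collapse (ct x) = collapse x)]].
Proof.
move=> [Hdiv Hsing] [[a1 aM] Hinv [b1 bM] Hcol].
exists (Om' gT Om).
have acan : forall g, cancel (alpha g) (alpha g^-1%g).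
  by move=> g x; rewrite -aM mulVg a1.
have facet_img : forall g S, facet Om S -> facet Om (alpha g @: S).
  move=> g S /andP[sS fS]; apply/andP; split; first by rewrite /simplex Hinv.
  apply/forallP => T; apply/implyP => pT.
  have : S \proper alpha g^-1%g @: T.
    have -> : S = alpha g^-1%g @: (alpha g @: S).
      by rewrite -imset_comp -[LHS]imset_id; apply: eq_imset => x /=; rewrite acan.
    apply: imset_proper pT => x y _ _; exact: (can_inj (acan _)).
  by move=> /(implyP (forallP fS _)); rewrite /simplex Hinv.
have facet_inv : forall g (S : {set 'I_n.+1}), facet Om (alpha g @: S) = facet Om S.
  move=> g S; apply/idP/idP; last exact: facet_img.

  move/(facet_img g^-1%g); rewrite -imset_comp.
  by rewrite (eq_imset _ (acan g)) imset_id.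
split.
- split.
  + move=> S1 S2 sub; rewrite /Om'.
    case f2: (facet Om S2); case f1: (facet Om S1).
    * have [->|p] := eqVproper sub; first by [].
      move: f1 => /andP[_ /forallP/(_ S2)/implyP/(_ p)].
      by move: f2 => /andP[-> _].
    * exact: dvdn_mulr (Hdiv _ _ sub).
    * have [eq|p] := eqVproper sub; first by rewrite -eq f1 in f2.
      move: f1 => /andP[_ /forallP/(_ S2)/implyP/(_ p)].
      by rewrite /simplex negbK => /eqP ->.
    * exact: Hdiv.
  + move=> i; have := simplex' gT Om [set i]; rewrite /simplex => ->; exact: Hsing.
- by move=> S /negbTE; rewrite /Om' => ->.
- exact: facet'.
- by move=> F fF; rewrite Om'_facet // leq_pmulr // m_gt0.
exists (fun g y => enc (beta g (dec1 y)) (g * dec2 y)%g).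
split.
- split.
  + by split.
  + by move=> g S; rewrite /Om' facet_inv Hinv.
  + split.
    * by move=> y; rewrite b1 mul1g enc_dec.
    * by move=> g h y; rewrite dec1_enc dec2_enc bM mulgA.
  + by move=> g y; have := Hcol g (dec1 y); rewrite /collapse /=.
- move=> g y E.
  have := congr1 (@dec2 _ _ _) E; rewrite dec2_enc.
  by move/(canRL (mulgK _)); rewrite mulgV.
- exists (@dec1 _ _ _); split.
  + by move=> g y; rewrite dec1_enc.
  + by [].
Qed.
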